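(* Let $(\mathfrak C:A)$, $(\mathfrak D:B)$ be corings. Let $(\Sigma,\mathfrak s)$ and $(\widetilde\Sigma,\widetilde{\mathfrak s})$ be pairs, each consisting of a $(B,A)$-bimodule and a $(B,A)$-bilinear map $\mathfrak D\otimes_B\Sigma\to\Sigma\otimes_A\mathfrak C$ (resp. $\mathfrak D\otimes_B\widetilde\Sigma\to\widetilde\Sigma\otimes_A\mathfrak C$) satisfying $(\Sigma\otimes_A\varepsilon_{\mathfrak C})\circ\mathfrak s=\varepsilon_{\mathfrak D}\otimes_B\Sigma$ and $(\Sigma\otimes_A\Delta_{\mathfrak C})\circ\mathfrak s=(\mathfrak s\otimes_A\mathfrak C)\circ(\mathfrak D\otimes_B\mathfrak s)\circ(\Delta_{\mathfrak D}\otimes_B\Sigma)$ (and likewise for $\widetilde{\mathfrak s}$). Call a $2$-cell from $(\Sigma,\mathfrak s)$ to $(\widetilde\Sigma,\widetilde{\mathfrak s})$ a $(B,A)$-bilinear map $\mathfrak a:\mathfrak D\otimes_B\Sigma\to\widetilde\Sigma$ such that $(\mathfrak a\otimes_A\mathfrak C)\circ(\mathfrak D\otimes_B\mathfrak s)\circ(\Delta_{\mathfrak D}\otimes_B\Sigma)=\widetilde{\mathfrak s}\circ(\mathfrak D\otimes_B\mathfrak a)\circ(\Delta_{\mathfrak D}\otimes_B\Sigma)$. Regard $\mathfrak D\otimes_B\Sigma$ as a $(\mathfrak D,\mathfrak C)$-bicomodule with left coaction $\Delta_{\mathfrak D}\otimes_B\Sigma$ and right coaction $(\mathfrak D\otimes_B\mathfrak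 s)\circ(\Delta_{\mathfrak D}\otimes_B\Sigma)$, and similarly $\mathfrak D\otimes_B\widetilde\Sigma$. Then $\mathfrak a\mapsto(\mathfrak D\otimes_B\mathfrak a)\circ(\Delta_{\mathfrak D}\otimes_B\Sigma)$ is a bijection from the set of $2$-cells $(\Sigma,\mathfrak s)\to(\widetilde\Sigma,\widetilde{\mathfrak s})$ onto the set $\mathrm{Hom}^{\mathfrak D,\mathfrak C}(\mathfrak D\otimes_B\Sigma,\mathfrak D\otimes_B\widetilde\Sigma)$ of $(\mathfrak D,\mathfrak C)$-bicolinear maps, with inverse $f\mapsto(\varepsilon_{\mathfrak D}\otimes_B\widetilde\Sigma)\circ f$.
   Context: $k$ is a commutative ring; all algebras are unital associative $k$-algebras. An $A$-coring $(\mathfrak C:A)$ is an $A$-bimodule $\mathfrak C$ with coassociative comultiplication $\Delta_{\mathfrak C}:\mathfrak C\to\mathfrak C\otimes_A\mathfrak C$ and counit $\varepsilon_{\mathfrak C}:\mathfrak C\to A$, both $A$-bimodule maps. A $(\mathfrak D,\mathfrak C)$-bicomodule is a $(B,A)$-bimodule with a left $\mathfrak D$-comodule and right $\mathfrak C$-comodule structure whose coactions commute; bicolinear maps are maps colinear for both coactions. Identifications $B\otimes_B\Sigma\cong\Sigma\cong\Sigma\otimes_AA$ are used tacitly. *)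

(* Defs.v *)
From HB Require Import structures.
From mathcomp Require Import all_boot all_order all_algebra.
Set Implicit Arguments. Unset Strict Implicit. Unset Printing Implicit Defensive.
Import GRing.Theory.
Local Open Scope ring_scope.

Record bimod (k : comNzRingType) (R S : algType k) := Bimod {
  bm_sort :> zmodType;
  lact : R -> bm_sort -> bm_sort;
  ract : bm_sort -> S -> bm_sort;
  lactDl : forall r r' x, lact (r + r') x = lact r x + lact r' x;
  lactDr : forall r x y, lact r (x + y) = lact r x + lact r y;
  lact1 : forall x, lact 1 x = x;
  lactM : forall r r' x, lact (r * r') x = lact r (lact r' x);
  ractDl : forall x y s, ract (x + y) s = ract x s + ract y s;
  ractDr : forall x s s', ract x (s + s') = ract x s + ract x s';
  ract1 : forall x, ract x 1 = x;
  ractM : forall x s s', ract x (s * s') = ract (ract x s) s';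
  lractA : forall r x s, lact r (ract x s) = ract (lact r x) s;
  kcentral : forall (c : k) x, lact (c%:A) x = ract x (c%:A) }.
Arguments lact {k R S b}.
Arguments ract {k R S b}.

Definition additive_map (U V : zmodType) (f : U -> V) :=
  forall x y, f (x + y) = f x + f y.

Definition bimap (k : comNzRingType) (R S : algType k) (M N : bimod R S) (f : M -> N) :=
  [/\ additive_map f,
      forall r x, f (lact r x) = lact r (f x) &
      forall x s, f (ract x s) = ract (f x) s].

Section Reg.
Variables (k : comNzRingType) (A : algType k).
Definition reg : bimod A A.
Proof.
refine (@Bimod k A A A (fun r x => r * x) (fun x s => x * s) _ _ _ _ _ _ _ _ _ _).
- by move=> *; rewrite mulrDl.
- by move=> *; rewrite mulrDr.
- by move=> *; rewrite mul1r.
- by move=> *; rewrite mulrA.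
- by move=> *; rewrite mulrDl.
- by move=> *; rewrite mulrDr.
- by move=> *; rewrite mulr1.
- by move=> *; rewrite mulrA.
- by move=> *; rewrite mulrA.
- by move=> c x; rewrite mulr_algl mulr_algr.
Defined.
End Reg.

Definition balanced (k : comNzRingType) (R S T : algType k) (M : bimod R S) (N : bimod S T)
  (X : zmodType) (phi : M -> N -> X) :=
  [/\ forall m m' n, phi (m + m') n = phi m n + phi m' n,
      forall m n n', phi m (n + n') = phi m n + phi m n' &
      forall m s n, phi (ract m s) n = phi m (lact s n)].

(* A tensor product M (x)_S N, given by its universal property
   (as an abelian group), together with its (R,T)-bimodule structure. *)
Record tensor (k : comNzRingType) (R S T : algType k) (M : bimod R S) (N : bimod S T) := Tensor {
  tobj : bimod R T;
  tmul : M -> N -> tobj;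
  tmul_balanced : balanced tmul;
  tmul_lact : forall r m n, lact r (tmul m n) = tmul (lact r m) n;
  tmul_ract : forall m n t, ract (tmul m n) t = tmul m (ract n t);
  tlift : forall X : zmodType, (M -> N -> X) -> tobj -> X;
  tlift_additive : forall (X : zmodType) (phi : M -> N -> X), balanced phi -> additive_map (tlift phi);
  tlift_tmul : forall (X : zmodType) (phi : M -> N -> X), balanced phi ->
     forall m n, tlift phi (tmul m n) = phi m n;
  tlift_uniq : forall (X : zmodType) (phi : M -> N -> X) (g : tobj -> X), balanced phi ->
     additive_map g -> (forall m n, g (tmul m n) = phi m n) -> g =1 tlift phi }.

Definition tensor_system (k : comNzRingType) :=
  forall (R S T : algType k) (M : bimod R S) (N : bimod S T), tensor M N.

Section TensorOps.
Variables (k : comNzRingType) (ts : tensor_system k).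

Definition tns (R S T : algType k) (M : bimod R S) (N : bimod S T) : bimod R T :=
  tobj (ts M N).
Definition tm (R S T : algType k) (M : bimod R S) (N : bimod S T) (m : M) (n : N)
  : tns M N := tmul (ts M N) m n.
Definition tlft (R S T : algType k) (M : bimod R S) (N : bimod S T) (X : zmodType)
  (phi : M -> N -> X) : tns M N -> X := @tlift _ _ _ _ _ _ (ts M N) X phi.

Definition tmap (R S T : algType k) (M M' : bimod R S) (N N' : bimod S T)
  (f : M -> M') (g : N -> N') : tns M N -> tns M' N' :=
  @tlft R S T M N (tns M' N') (fun m n => tm (f m) (g n)).

Definition assoc (R S T U : algType k) (M : bimod R S) (N : bimod S T) (P : bimod T U)
  : tns (tns M N) P -> tns M (tns N P) :=
  @tlft _ _ _ (tns M N) P (tns M (tns N P))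
    (fun x p => @tlft _ _ _ M N (tns M (tns N P)) (fun m n => tm m (tm n p)) x).
Definition assocV (R S T U : algType k) (M : bimod R S) (N : bimod S T) (P : bimod T U)
  : tns M (tns N P) -> tns (tns M N) P :=
  @tlft _ _ _ M (tns N P) (tns (tns M N) P)
    (fun m y => @tlft _ _ _ N P (tns (tns M N) P) (fun n p => tm (tm m n) p) y).

Definition lu (R S : algType k) (M : bimod R S) : tns (reg R) M -> M :=
  @tlft _ _ _ (reg R) M M (fun r m => lact r m).
Definition ru (R S : algType k) (M : bimod R S) : tns M (reg S) -> M :=
  @tlft _ _ _ M (reg S) M (fun m s => ract m s).

Definition is_coring (A : algType k) (C : bimod A A)
  (Delta : C -> tns C C) (eps : C -> reg A) :=
  [/\ bimap Delta, bimap eps,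
      forall x, assoc (tmap Delta id (Delta x)) = tmap id Delta (Delta x),
      forall x, lu (tmap eps id (Delta x)) = x &
      forall x, ru (tmap id eps (Delta x)) = x].

Section Pairs.
Variables (A B : algType k) (C : bimod A A) (DeltaC : C -> tns C C) (epsC : C -> reg A)
  (D : bimod B B) (DeltaD : D -> tns D D) (epsD : D -> reg B).

Definition deltaL (Sig : bimod B A) (x : tns D Sig) : tns D (tns D Sig) :=
  assoc (tmap DeltaD id x).

Definition is_pair (Sig : bimod B A) (s : tns D Sig -> tns Sig C) :=
  [/\ bimap s,
      forall x, ru (tmap id epsC (s x)) = lu (tmap epsD id x) &
      forall x, tmap id DeltaC (s x) =
                assoc (tmap s id (assocV (tmap id s (deltaL x))))].

Definition rhoR (Sig : bimod B A) (s : tns D Sig -> tns Sig C) (x : tns D Sig)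
  : tns (tns D Sig) C := assocV (tmap id s (deltaL x)).

Definition two_cell (Sig Sig' : bimod B A) (s : tns D Sig -> tns Sig C)
  (s' : tns D Sig' -> tns Sig' C) (a : tns D Sig -> Sig') :=
  bimap a /\
  forall x, tmap a id (assocV (tmap id s (deltaL x))) = s' (tmap id a (deltaL x)).

Definition bicolinear (Sig Sig' : bimod B A) (s : tns D Sig -> tns Sig C)
  (s' : tns D Sig' -> tns Sig' C) (f : tns D Sig -> tns D Sig') :=
  [/\ bimap f,
      forall x, tmap id f (deltaL x) = deltaL (f x) &
      forall x, tmap f id (rhoR s x) = rhoR s' (f x)].

Definition cell_to_map (Sig Sig' : bimod B A) (a : tns D Sig -> Sig')
  : tns D Sig -> tns D Sig' := fun x => tmap id a (deltaL x).

Definition map_to_cell (Sig Sig' : bimod B A) (f : tns D Sig -> tns D Sig')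
  : tns D Sig -> Sig' := fun x => lu (tmap epsD id (f x)).
End Pairs.
End TensorOps.

(* Main.v *)
Require Import Defs.
From HB Require Import structures.
From mathcomp Require Import all_boot all_order all_algebra.
Set Implicit Arguments. Unset Strict Implicit. Unset Printing Implicit Defensive.
Import GRing.Theory.
Local Open Scope ring_scope.

Section Base.
Variables (k : comNzRingType) (ts : tensor_system k).
Local Notation tm := (tm ts).
Local Notation tlft := (@tlft k ts _ _ _ _ _ _).
Local Notation tmap := (@tmap k ts _ _ _ _ _ _ _).
Local Notation assoc := (@assoc k ts _ _ _ _ _ _ _).
Local Notation assocV := (@assocV k ts _ _ _ _ _ _ _).
Local Notation lu := (@lu k ts _ _ _).
Local Notation ru := (@ru k ts _ _ _).

Definition ladd (R S S' : algType k) (M : bimod R S) (N : bimod R S') (f : M -> N) :=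
  additive_map f /\ forall r x, f (lact r x) = lact r (f x).
Definition radd (R R' S : algType k) (M : bimod R S) (N : bimod R' S) (f : M -> N) :=
  additive_map f /\ forall x s, f (ract x s) = ract (f x) s.

Lemma bimap_ladd (R S : algType k) (M N : bimod R S) (f : M -> N) : bimap f -> ladd f.
Proof. by case. Qed.
Lemma bimap_radd (R S : algType k) (M N : bimod R S) (f : M -> N) : bimap f -> radd f.
Proof. by case. Qed.
Lemma lr_bimap (R S : algType k) (M N : bimod R S) (f : M -> N) : ladd f -> radd f -> bimap f.
Proof. by move=> [? ?] [? ?]; split. Qed.
Lemma ladd_add (R S S' : algType k) (M : bimod R S) (N : bimod R S') (f : M -> N) : ladd f -> additive_map f.
Proof. by case. Qed.
Lemma radd_add (R R' S : algType k) (M : bimod R S) (N : bimod R' S) (f : M -> N) : radd f -> additive_map f.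
Proof. by case. Qed.
Lemma bimap_add (R S : algType k) (M N : bimod R S) (f : M -> N) : bimap f -> additive_map f.
Proof. by case. Qed.
Lemma ladd_id (R S : algType k) (M : bimod R S) : @ladd R S S M M id.
Proof. by []. Qed.
Lemma radd_id (R S : algType k) (M : bimod R S) : @radd R R S M M id.
Proof. by []. Qed.
Lemma bimap_id (R S : algType k) (M : bimod R S) : @bimap k R S M M id.
Proof. by []. Qed.
Lemma add_id (M : zmodType) : additive_map (fun x : M => x).
Proof. by []. Qed.
Lemma add_comp (M N P : zmodType) (f : N -> P) (g : M -> N) :
  additive_map f -> additive_map g -> additive_map (fun x => f (g x)).
Proof. by move=> hf hg x y; rewrite hg hf. Qed.
Lemma bimap_comp (R S : algType k) (M N P : bimod R S) (f : N -> P) (g : M -> N) :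
  bimap f -> bimap g -> bimap (fun x => f (g x)).
Proof.
case=> f1 f2 f3 [g1 g2 g3]; split.
- exact: add_comp.
- by move=> r x; rewrite g2 f2.
- by move=> x s; rewrite g3 f3.
Qed.
Lemma lact_add (R S : algType k) (M : bimod R S) r : additive_map (@lact _ _ _ M r).
Proof. by move=> x y; rewrite lactDr. Qed.
Lemma ract_add (R S : algType k) (M : bimod R S) s : additive_map (fun x : M => ract x s).
Proof. by move=> x y; rewrite ractDl. Qed.

Section T.
Variables (R S T : algType k) (M : bimod R S) (N : bimod S T).
Lemma tmDl (m m' : M) (n : N) : tm (m + m') n = tm m n + tm m' n.
Proof. by have [h _ _] := tmul_balanced (ts M N); exact: h. Qed.
Lemma tmDr (m : M) (n n' : N) : tm m (n + n') = tm m n + tm m n'.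
Proof. by have [_ h _] := tmul_balanced (ts M N); exact: h. Qed.
Lemma tmA (m : M) s (n : N) : tm (ract m s) n = tm m (lact s n).
Proof. by have [_ _ h] := tmul_balanced (ts M N); exact: h. Qed.
Lemma tm_lact r (m : M) (n : N) : lact r (tm m n) = tm (lact r m) n.
Proof. exact: tmul_lact. Qed.
Lemma tm_ract (m : M) (n : N) t : ract (tm m n) t = tm m (ract n t).
Proof. exact: tmul_ract. Qed.
Lemma tmDl_add (n : N) : additive_map (fun m : M => tm m n).
Proof. by move=> ??; rewrite tmDl. Qed.
Lemma tmDr_add (m : M) : additive_map (fun n : N => tm m n).
Proof. by move=> ??; rewrite tmDr. Qed.
Lemma tlft_tm (X : zmodType) (phi : M -> N -> X) m n :
  balanced phi -> tlft phi (tm m n) = phi m n.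
Proof. by move=> b; exact: (tlift_tmul (ts M N) b). Qed.
Lemma tlft_add (X : zmodType) (phi : M -> N -> X) :
  balanced phi -> additive_map (tlft phi).
Proof. by move=> b; exact: (@tlift_additive _ _ _ _ _ _ (ts M N) X phi b). Qed.
Lemma ext (X : zmodType) (g1 g2 : tns ts M N -> X) :
  additive_map g1 -> additive_map g2 ->
  (forall m n, g1 (tm m n) = g2 (tm m n)) -> forall x, g1 x = g2 x.
Proof.
move=> a1 a2 e x.
have b : balanced (fun m n => g1 (tm m n)).
  by split=> *; rewrite ?tmDl ?tmDr ?a1 // tmA.
rewrite (tlift_uniq b a1 (fun _ _ => erefl)).
by rewrite (tlift_uniq b a2 (fun m n => esym (e m n))).
Qed.
End T.


Lemma add_plus (M N : zmodType) (f g : M -> N) :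
  additive_map f -> additive_map g -> additive_map (fun x => f x + g x).
Proof. by move=> hf hg x y; rewrite hf hg addrACA. Qed.

Create HintDb lin.
Hint Resolve bimap_ladd bimap_radd ladd_add radd_add bimap_add ladd_id radd_id
  bimap_id add_id lact_add ract_add tmDl_add tmDr_add tlft_add : lin.

Ltac lin := solve [eauto 12 with lin].

Ltac add_solve :=
  lazymatch goal with
  | |- additive_map (fun x => @?F x + @?G x) => apply: (add_plus (f:=F) (g:=G)); add_solve
  | |- additive_map (fun x => Defs.tm _ x _) => apply: tmDl_add
  | |- additive_map (fun x => Defs.tm _ _ x) => apply: tmDr_add
  | |- additive_map (fun x => Defs.tm ?t (@?G x) ?n) =>
      apply: (add_comp (f:= fun y => Defs.tm t y n) (g:=G)); [apply: tmDl_add | add_solve]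
  | |- additive_map (fun x => Defs.tm ?t ?m (@?G x)) =>
      apply: (add_comp (f:= fun y => Defs.tm t m y) (g:=G)); [apply: tmDr_add | add_solve]
  | |- additive_map (fun x => ract (@?G x) ?s) =>
      apply: (add_comp (f:= fun y => ract y s) (g:=G)); [apply: ract_add | add_solve]
  | |- additive_map (fun x => ?F (@?G x)) => apply: (add_comp (f:=F) (g:=G)); [lin | add_solve]
  | |- _ => lin
  end.

Ltac ext1 := match goal with |- forall x, @?L x = @?R x =>
  apply: (ext (g1:=L) (g2:=R)); [add_solve|add_solve| move=> ? ?; cbv beta] end.

Section TM.
Variables (R S T : algType k) (M M' : bimod R S) (N N' : bimod S T).
Variables (f : M -> M') (g : N -> N').
Lemma tmap_bal : radd f -> ladd g -> balanced (fun m n => tm (f m) (g n)).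
Proof.
move=> [fa fr] [ga gl]; split=> *; first by rewrite fa tmDl.
  by rewrite ga tmDr.
by rewrite fr gl tmA.
Qed.
Lemma tmap_tm m n : radd f -> ladd g -> tmap f g (tm m n) = tm (f m) (g n).
Proof. by move=> hf hg; rewrite /Defs.tmap tlft_tm //; exact: tmap_bal. Qed.
Lemma tmap_add : radd f -> ladd g -> additive_map (tmap f g).
Proof. by move=> hf hg; apply: tlft_add; exact: tmap_bal. Qed.
Hint Resolve tmap_add : lin.
Lemma tmap_ladd : ladd f -> radd f -> ladd g -> ladd (tmap f g).
Proof.
move=> hl hf hg; split; first exact: tmap_add.
move=> r; ext1.
by rewrite tm_lact !tmap_tm // tm_lact; case: hl => _ ->.
Qed.
Lemma tmap_radd : radd f -> ladd g -> radd g -> radd (tmap f g).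
Proof.
move=> hf hg hr; split; first exact: tmap_add.
move=> x t; move: x; ext1.
by rewrite tm_ract !tmap_tm // tm_ract; case: hr => _ ->.
Qed.
End TM.
Hint Resolve tmap_add tmap_ladd tmap_radd : lin.
Lemma tmap_bimap (R S T : algType k) (M M' : bimod R S) (N N' : bimod S T)
  (f : M -> M') (g : N -> N') : bimap f -> bimap g -> bimap (tmap f g).
Proof. by move=> hf hg; apply: lr_bimap; lin. Qed.
Hint Resolve tmap_bimap : lin.


Section AS.
Variables (R S T U : algType k) (M : bimod R S) (N : bimod S T) (P : bimod T U).
Lemma assoc_in_bal (p : P) : balanced (fun (m : M) (n : N) => tm m (tm n p)).
Proof.
split=> *; first by rewrite tmDl.
  by rewrite tmDl tmDr.
by rewrite tmA tm_lact.
Qed.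
Hint Resolve assoc_in_bal : lin.
Lemma assoc_out_bal : balanced (fun x (p : P) => tlft (fun (m : M) (n : N) => tm m (tm n p)) x).
Proof.
split.
- move=> x x' p; exact: (tlft_add (assoc_in_bal p)).
- move=> x p p'; move: x; ext1.
  by rewrite !tlft_tm ?tmDr //; lin.
- move=> x s p; move: x; ext1.
  by rewrite tm_ract !tlft_tm ?tmA //; lin.
Qed.
Lemma assoc_tm m n p : assoc (tm (tm m n) p) = tm m (tm n p) :> tns ts M (tns ts N P).
Proof.
by rewrite /Defs.assoc tlft_tm ?tlft_tm //; first [exact: assoc_out_bal | exact: assoc_in_bal].
Qed.
Lemma assoc_add : additive_map (assoc : tns ts (tns ts M N) P -> _).
Proof. apply: tlft_add; exact: assoc_out_bal. Qed.

Lemma assocV_in_bal (m : M) : balanced (fun (n : N) (p : P) => tm (tm m n) p).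
Proof.
split=> *; first by rewrite tmDr tmDl.
  by rewrite tmDr.
by rewrite -tm_ract tmA.
Qed.
Hint Resolve assocV_in_bal : lin.
Lemma assocV_out_bal : balanced (fun (m : M) y => tlft (fun (n : N) (p : P) => tm (tm m n) p) y).
Proof.
split.
- move=> m m' y; move: y; ext1.
  by rewrite !tlft_tm ?tmDl //; lin.
- move=> m y y'; exact: (tlft_add (assocV_in_bal m)).
- move=> m s y; move: y; ext1.
  by rewrite tm_lact !tlft_tm ?tmA //; lin.
Qed.
Lemma assocV_tm m n p : assocV (tm m (tm n p)) = tm (tm m n) p :> tns ts (tns ts M N) P.
Proof.
by rewrite /Defs.assocV tlft_tm ?tlft_tm //; first [exact: assocV_out_bal | exact: assocV_in_bal].
Qed.
Lemma assocV_add : additive_map (assocV : tns ts M (tns ts N P) -> _).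
Proof. apply: tlft_add; exact: assocV_out_bal. Qed.
End AS.
Hint Resolve assoc_add assocV_add : lin.

Section EXT2.
Variables (R S T U : algType k) (M : bimod R S) (N : bimod S T) (P : bimod T U).
Lemma ext2 (X : zmodType) (g1 g2 : tns ts (tns ts M N) P -> X) :
  additive_map g1 -> additive_map g2 ->
  (forall m n p, g1 (tm (tm m n) p) = g2 (tm (tm m n) p)) -> forall x, g1 x = g2 x.
Proof.
move=> a1 a2 e; apply: ext => // y p; move: y.
apply: (ext (g1 := fun y => g1 (tm y p)) (g2 := fun y => g2 (tm y p))) => //.
- by move=> ??; rewrite tmDl a1.
- by move=> ??; rewrite tmDl a2.
Qed.
Lemma ext2' (X : zmodType) (g1 g2 : tns ts M (tns ts N P) -> X) :
  additive_map g1 -> additive_map g2 ->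
  (forall m n p, g1 (tm m (tm n p)) = g2 (tm m (tm n p))) -> forall x, g1 x = g2 x.
Proof.
move=> a1 a2 e; apply: ext => // m y; move: y.
apply: (ext (g1 := fun y => g1 (tm m y)) (g2 := fun y => g2 (tm m y))) => //.
- by move=> ??; rewrite tmDr a1.
- by move=> ??; rewrite tmDr a2.
Qed.
End EXT2.

Ltac ext1n := match goal with |- forall x, @?L x = @?R x =>
  apply: (ext (g1:=L) (g2:=R)); [add_solve|add_solve| cbv beta] end.

Ltac ext2 := match goal with |- forall x, @?L x = @?R x =>
  first [apply: (ext2 (g1:=L) (g2:=R)) | apply: (ext2' (g1:=L) (g2:=R))];
  [add_solve|add_solve| move=> ? ? ?; cbv beta] end.

Section AS2.
Variables (R S T U : algType k) (M : bimod R S) (N : bimod S T) (P : bimod T U).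
Lemma assoc_bimap : bimap (assoc : tns ts (tns ts M N) P -> _).
Proof.
split; first exact: assoc_add.
- move=> r; ext2. by rewrite !tm_lact !assoc_tm tm_lact.
- move=> x t; move: x; ext2. by rewrite !tm_ract !assoc_tm !tm_ract.
Qed.
Lemma assocV_bimap : bimap (assocV : tns ts M (tns ts N P) -> _).
Proof.
split; first exact: assocV_add.
- move=> r; ext2. by rewrite !tm_lact !assocV_tm !tm_lact.
- move=> x t; move: x; ext2. by rewrite !tm_ract !assocV_tm !tm_ract.
Qed.
End AS2.
Hint Resolve assoc_bimap assocV_bimap : lin.

Section LU.
Variables (R S : algType k) (M : bimod R S).
Lemma lu_bal : balanced (fun (r : reg R) (m : M) => lact r m).
Proof. by split=> *; rewrite ?lactDl ?lactDr //= lactM. Qed.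
Lemma ru_bal : balanced (fun (m : M) (s : reg S) => ract m s).
Proof. by split=> *; rewrite ?ractDl ?ractDr //= ractM. Qed.
Lemma lu_tm r (m : M) : lu (tm r m) = lact r m.
Proof. by rewrite /Defs.lu tlft_tm //; exact: lu_bal. Qed.
Lemma ru_tm (m : M) s : ru (tm m s) = ract m s.
Proof. by rewrite /Defs.ru tlft_tm //; exact: ru_bal. Qed.
Lemma lu_bimap : bimap (lu : tns ts (reg R) M -> M).
Proof.
have ha : additive_map (lu : tns ts (reg R) M -> M) by apply: tlft_add; exact: lu_bal.
split=> //.
- move=> r; ext1. by rewrite tm_lact !lu_tm /= lactM.
- move=> x t; move: x; ext1. by rewrite tm_ract !lu_tm lractA.
Qed.
Lemma ru_bimap : bimap (ru : tns ts M (reg S) -> M).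
Proof.
have ha : additive_map (ru : tns ts M (reg S) -> M) by apply: tlft_add; exact: ru_bal.
split=> //.
- move=> r; ext1. by rewrite tm_lact !ru_tm lractA.
- move=> x t; move: x; ext1. by rewrite tm_ract !ru_tm /= ractM.
Qed.
End LU.
Hint Resolve lu_bimap ru_bimap : lin.


Lemma ladd_comp (R S1 S2 S3 : algType k) (M : bimod R S1) (N : bimod R S2) (P : bimod R S3) (f : N -> P) (g : M -> N) :
  ladd f -> ladd g -> ladd (fun x => f (g x)).
Proof. by move=> [f1 f2] [g1 g2]; split; [exact: add_comp | move=> r x; rewrite g2 f2]. Qed.
Lemma radd_comp (R1 R2 R3 S : algType k) (M : bimod R1 S) (N : bimod R2 S) (P : bimod R3 S) (f : N -> P) (g : M -> N) :
  radd f -> radd g -> radd (fun x => f (g x)).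
Proof. by move=> [f1 f2] [g1 g2]; split; [exact: add_comp | move=> x r; rewrite g2 f2]. Qed.
Hint Resolve ladd_comp radd_comp : lin.

Lemma ladd_assoc_tm (R S T U : algType k) (M : bimod R S) (N : bimod S T) (P : bimod T U) (p : P) :
  ladd (fun v : tns ts M N => assoc (tm v p)).
Proof.
split; first by add_solve.
by move=> r v; rewrite -tm_lact; case: (@assoc_bimap R S T U M N P) => _ -> _.
Qed.
Hint Resolve ladd_assoc_tm : lin.

Section TR.
Variables (R S T T' : algType k) (M : bimod R S) (N : bimod S T) (N' : bimod S T').
Variable (g : N -> N').
Definition tmapR : tns ts M N -> tns ts M N' := tlft (fun (m : M) (n : N) => tm m (g n)).
Lemma tmapR_bal : ladd g -> balanced (fun (m : M) (n : N) => tm m (g n)).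
Proof.
move=> [ga gl]; split=> *; first by rewrite tmDl.
  by rewrite ga tmDr.
by rewrite gl tmA.
Qed.
Lemma tmapR_tm m n : ladd g -> tmapR (tm m n) = tm m (g n).
Proof. by move=> hg; rewrite /tmapR tlft_tm //; exact: tmapR_bal. Qed.
Lemma tmapR_add : ladd g -> additive_map tmapR.
Proof. by move=> hg; apply: tlft_add; exact: tmapR_bal. Qed.
End TR.
Hint Resolve tmapR_add : lin.

Ltac simp := repeat (first [rewrite tmap_tm | rewrite tmapR_tm | rewrite assoc_tm | rewrite assocV_tm
   | rewrite lu_tm | rewrite ru_tm ]; try lin; cbv beta).

Section TC.
Variables (R S T : algType k) (M M' M'' : bimod R S) (N N' N'' : bimod S T).
Lemma tmap_compr (g : N' -> N'') (g' : N -> N') (x : tns ts M N) :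
  ladd g -> ladd g' -> tmap id g (tmap id g' x) = tmap id (fun z => g (g' z)) x.
Proof. by move=> h1 h2; move: x; ext1; simp. Qed.
Lemma tmap_compl (f : M' -> M'') (f' : M -> M') (x : tns ts M N) :
  radd f -> radd f' -> tmap f id (tmap f' id x) = tmap (fun z => f (f' z)) id x.
Proof. by move=> h1 h2; move: x; ext1; simp. Qed.
Lemma tmap_extr (g g' : N -> N') (x : tns ts M N) :
  ladd g -> ladd g' -> g =1 g' -> tmap id g x = tmap id g' x.
Proof. by move=> h1 h2 e; move: x; ext1; simp; rewrite e. Qed.
End TC.

Lemma assocV_nat (R S T U : algType k) (M M' : bimod R S) (N N' : bimod S T) (P P' : bimod T U)
  (f : M -> M') (g : N -> N') (h : P -> P') x :
  radd f -> bimap g -> ladd h ->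
  assocV (tmap f (tmap g h) x) = tmap (tmap f g) h (assocV x).
Proof. by move=> hf hg hh; move: x; ext2; simp. Qed.


Section Main.
Variables (A B : algType k) (D : bimod B B) (DeltaD : D -> tns ts D D) (epsD : D -> reg B).
Hypothesis HDb : bimap DeltaD.
Hypothesis Heb : bimap epsD.
Hypothesis coass : forall x, assoc (tmap DeltaD id (DeltaD x)) = tmap id DeltaD (DeltaD x).
Hypothesis cuL : forall x, lu (tmap epsD id (DeltaD x)) = x.
Hypothesis cuR : forall x, ru (tmap id epsD (DeltaD x)) = x.
Local Notation lam := (@deltaL k ts A B D DeltaD _).

Lemma deltaL_bimap (Sig : bimod B A) : bimap (@deltaL k ts A B D DeltaD Sig).
Proof. exact: (bimap_comp (assoc_bimap _ _ _) (tmap_bimap HDb (bimap_id _))). Qed.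
Hint Resolve deltaL_bimap : lin.

Lemma deltaL_tm (Sig : bimod B A) d (n : Sig) : lam (tm d n) = assoc (tm (DeltaD d) n).
Proof. by rewrite /deltaL tmap_tm //; lin. Qed.

Lemma deltaL_nat (Sig Sig' : bimod B A) (g : Sig -> Sig') x :
  ladd g -> lam (tmap id g x) = tmap id (tmap id g) (lam x).
Proof.
move=> hg; move: x; ext1.
rewrite tmap_tm; try lin. rewrite !deltaL_tm.
by move: (DeltaD _); ext1; simp.
Qed.

Lemma deltaL_coass (Sig : bimod B A) (x : tns ts D Sig) :
  tmap id lam (lam x) = lam (lam x).
Proof.
move: x; ext1n => d sg; rewrite deltaL_tm.
have eA : forall y : tns ts D D, tmap id lam (assoc (tm y sg)) = tmapR (fun v : tns ts D D => assoc (tm v sg)) (tmap id DeltaD y).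
  ext1; simp; by rewrite deltaL_tm.
have eB : forall y : tns ts D D, lam (assoc (tm y sg)) = tmapR (fun v : tns ts D D => assoc (tm v sg)) (assoc (tmap DeltaD id y)).
  ext1; simp; rewrite deltaL_tm.
  by move: (DeltaD _); ext1; simp.
by rewrite eA eB coass.
Qed.


Lemma rhoR_bimap (C : bimod A A) (Sig : bimod B A) (s : tns ts D Sig -> tns ts Sig C) :
  bimap s -> bimap (rhoR DeltaD s).
Proof.
move=> hs; apply: bimap_comp; first exact: assocV_bimap.
apply: bimap_comp; [exact: tmap_bimap | exact: deltaL_bimap].
Qed.
Hint Resolve rhoR_bimap : lin.

Lemma compat (C : bimod A A) (Sig : bimod B A) (s : tns ts D Sig -> tns ts Sig C) (x : tns ts D Sig) :
  bimap s ->
  tmap lam id (rhoR DeltaD s x) = assocV (tmap id (rhoR DeltaD s) (lam x)).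
Proof.
move=> hs; move: x; ext1n => d sg; rewrite /rhoR !deltaL_tm.
have eR : forall y : tns ts D D, assocV (tmap id (rhoR DeltaD s) (assoc (tm y sg))) =
   assocV (tmapR (fun v : tns ts D D => assocV (tmap id s (assoc (tm v sg)))) (tmap id DeltaD y)).
  by ext1; simp; rewrite /rhoR deltaL_tm.
have eL : forall y : tns ts D D, tmap lam id (assocV (tmap id s (assoc (tm y sg)))) =
   assocV (tmapR (fun v : tns ts D D => assocV (tmap id s (assoc (tm v sg)))) (assoc (tmap DeltaD id y))).
  ext1n => e f; simp.
  have L1 : forall u : tns ts D D,
      assocV (tmapR (fun v : tns ts D D => assocV (tmap id s (assoc (tm v sg)))) (assoc (tm u f)))
      = assocV (tmap id assocV (assoc (tm u (s (tm f sg))))).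
    by ext1; simp.
  rewrite L1; move: (s (tm f sg)); ext1n => sg' c; simp.
  rewrite deltaL_tm.
  by move: (DeltaD e); ext1; simp.
by rewrite eR -coass eL.
Qed.

Lemma counit_lam (Sig : bimod B A) (z : tns ts D Sig) :
  tmap id (fun v => lu (tmap epsD id v)) (lam z) = z.
Proof.
move: z; ext1n => d sg; rewrite deltaL_tm.
transitivity (tm (ru (tmap id epsD (DeltaD d))) sg); last by rewrite cuR.
by move: (DeltaD d); ext1; simp; rewrite tmA.
Qed.

Lemma counit_rho (C : bimod A A) (Sig : bimod B A) (s : tns ts D Sig -> tns ts Sig C)
  (z : tns ts D Sig) : bimap s ->
  tmap (fun v => lu (tmap epsD id v)) id (rhoR DeltaD s z) = s z.
Proof.
move=> hs; move: z; ext1n => d sg; rewrite /rhoR deltaL_tm.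
transitivity (s (tm (lu (tmap epsD id (DeltaD d))) sg)); last by rewrite cuL.
move: (DeltaD d); ext1n => e f; simp.
rewrite -tm_lact; case: hs => _ -> _.
by move: (s (tm f sg)); ext1; simp; rewrite tm_lact.
Qed.

Lemma counit_cell (Sig Sig' : bimod B A) (a : tns ts D Sig -> Sig') (x : tns ts D Sig) :
  bimap a -> lu (tmap epsD id (tmap id a (lam x))) = a x.
Proof.
move=> ha; move: x; ext1n => d sg; rewrite deltaL_tm.
transitivity (a (tm (lu (tmap epsD id (DeltaD d))) sg)); last by rewrite cuL.
move: (DeltaD d); ext1n => e f; simp.
by rewrite -tm_lact; case: ha => _ -> _.
Qed.

Hint Resolve bimap_comp : lin.

Section Parts.
Variables (C : bimod A A) (Sig Sig' : bimod B A)
  (s : tns ts D Sig -> tns ts Sig C) (s' : tns ts D Sig' -> tns ts Sig' C).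
Hypotheses (hs : bimap s) (hs' : bimap s').

Lemma part1 a : two_cell DeltaD s s' a -> bicolinear DeltaD s s' (cell_to_map DeltaD a).
Proof.
move=> [ha hc].
have hF : bimap (cell_to_map DeltaD a) by rewrite /cell_to_map; lin.
split=> // x; rewrite /cell_to_map.
- rewrite -(tmap_compr (g:=tmap id a) (g':=lam)); try lin.
  rewrite deltaL_coass -deltaL_nat //; lin.
- rewrite -(tmap_compl (f:=tmap id a) (f':=lam)); try lin.
  rewrite compat //.
  rewrite -assocV_nat; try lin.
  rewrite tmap_compr; try lin.
  have e : (fun z => tmap a id (rhoR DeltaD s z)) =1 (fun z => s' (tmap id a (lam z))).
    by move=> z; rewrite -hc.
  rewrite (tmap_extr _ _ _ e); try lin.
  rewrite /rhoR deltaL_nat; try lin.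
  rewrite -deltaL_coass.
  rewrite tmap_compr; try lin.
  rewrite tmap_compr; try lin.
Qed.

Lemma part2 f : bicolinear DeltaD s s' f -> two_cell DeltaD s s' (map_to_cell epsD f).
Proof.
move=> [hf hl hr]; split; first by rewrite /map_to_cell; lin.
move=> x; rewrite /map_to_cell.
rewrite -(tmap_compl (f := fun v => lu (tmap epsD id v)) (f' := f)); try lin.
change (assocV (tmap id s (deltaL DeltaD x))) with (rhoR DeltaD s x).
rewrite hr counit_rho //.
rewrite -(tmap_compr (g := fun v => lu (tmap epsD id v)) (g' := f)); try lin.
by rewrite hl counit_lam.
Qed.

Lemma part3 a : two_cell DeltaD s s' a -> map_to_cell epsD (cell_to_map DeltaD a) =1 a.
Proof. by move=> [ha _] x; rewrite /map_to_cell /cell_to_map counit_cell. Qed.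

Lemma part4 f : bicolinear DeltaD s s' f -> cell_to_map DeltaD (map_to_cell epsD f) =1 f.
Proof.
move=> [hf hl hr] x; rewrite /map_to_cell /cell_to_map.
rewrite -(tmap_compr (g := fun v => lu (tmap epsD id v)) (g' := f)); try lin.
by rewrite hl counit_lam.
Qed.
End Parts.
End Main.
End Base.

Theorem proposition2p2 (k : comNzRingType) (ts : tensor_system k) (A B : algType k)
  (C : bimod A A) (DeltaC : C -> tns ts C C) (epsC : C -> reg A)
  (D : bimod B B) (DeltaD : D -> tns ts D D) (epsD : D -> reg B)
  (Sig Sig' : bimod B A)
  (s : tns ts D Sig -> tns ts Sig C) (s' : tns ts D Sig' -> tns ts Sig' C) :
  is_coring DeltaC epsC -> is_coring DeltaD epsD ->
  is_pair DeltaC epsC DeltaD epsD s -> is_pair DeltaC epsC DeltaD epsD s' ->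
  [/\ forall a, two_cell DeltaD s s' a ->
                bicolinear DeltaD s s' (cell_to_map DeltaD a),
      forall f, bicolinear DeltaD s s' f ->
                two_cell DeltaD s s' (map_to_cell epsD f),
      forall a, two_cell DeltaD s s' a ->
                map_to_cell epsD (cell_to_map DeltaD a) =1 a &
      forall f, bicolinear DeltaD s s' f ->
                cell_to_map DeltaD (map_to_cell epsD f) =1 f].
Proof.
move=> _ [HDb Heb coass cuL cuR] [hs _ _] [hs' _ _].
split.
- move=> a ha; exact: (part1 HDb coass hs hs' ha).
- move=> f hf; eapply part2; eassumption.
- move=> a ha; eapply part3; eassumption.
- move=> f hf; eapply part4; eassumption.
Qed.
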